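(* Let $\mu$ be a probability measure on $(0,\infty)$, and for real $p$ let $\mu_p:=\int_{(0,\infty)}x^{p-2}\,\mu(\mathrm{d}x)\in(0,\infty]$. Define $L_\mu\colon(0,\infty)\to\mathbb{R}$ by $L_\mu(d):=\int_{(0,\infty)}\min\!\big(1,\tfrac{d}{x}\big)\,\mu(\mathrm{d}x)$. Fix $c\in(0,1)$. Then the equation $L_\mu(d)=c$ has a unique root $d\in(0,\infty)$; denote it by $\delta=\delta_\mu:=L_\mu^{-1}(c)$. If $\mu_3<\infty$, then $$\delta\le\delta_*:=\begin{cases} c\,\mu_3 & \text{if } 0<c\le\tfrac12,\\[4pt] \dfrac{\mu_3-(2c-1)^2/\mu_1}{4(1-c)} & \text{if } \tfrac12\le c<1.\end{cases}$$
   Context: Here $\mu_1=\int_{(0,\infty)}x^{-1}\,\mu(\mathrm{d}x)$ and $\mu_3=\int_{(0,\infty)}x\,\mu(\mathrm{d}x)$; if $\mu_1=\infty$, the term $(2c-1)^2/\mu_1$ is interpreted as $0$. The two formulas for $\delta_*$ agree at $c=\tfrac12$ (both equal $\mu_3/2$). *)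

(* Defs.v *)
From HB Require Import structures.
From mathcomp Require Import all_boot all_order all_algebra.
From mathcomp Require Import all_classical all_reals all_analysis.
Set Implicit Arguments. Unset Strict Implicit. Unset Printing Implicit Defensive.
Import Order.TTheory GRing.Theory Num.Theory.
Import numFieldNormedType.Exports.
Local Open Scope classical_set_scope.
Local Open Scope ring_scope.

Definition mu_moment (R : realType) (P : probability R R) (p : R) : \bar R :=
  (\int[P]_(x in `]0%R, +oo[) (x `^ (p - 2))%:E)%E.

Definition Lmu (R : realType) (P : probability R R) (d : R) : \bar R :=
  (\int[P]_(x in `]0%R, +oo[) (Num.min 1 (d / x))%:E)%E.

(* delta_*; the term (2c-1)^2/mu_1 is read as 0 when mu_1 = +oo. *)
Definition delta_star (R : realType) (P : probability R R) (c : R) : R :=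
  let m3 := fine (mu_moment P 3) in
  let t := match mu_moment P 1 with
           | r%:E => (2 * c - 1) ^+ 2 / r
           | _ => 0
           end in
  if c <= 2^-1 then c * m3 else (m3 - t) / (4 * (1 - c)).

(* Main.v *)
Require Import Defs.
From HB Require Import structures.
From mathcomp Require Import all_boot all_order all_algebra.
From mathcomp Require Import all_classical all_reals all_analysis.
From mathcomp Require Import ring lra measurable_realfun.
Import Order.TTheory GRing.Theory Num.Theory.
Import numFieldNormedType.Exports.
Local Open Scope classical_set_scope.
Local Open Scope ring_scope.
Section S.
Variable R : realType.
Let D : set R := `]0%R, +oo[%classic.
Lemma mD : measurable D. Proof. exact: measurable_itv. Qed.
Lemma oD : open D. Proof. by apply: itv_open_ends_open. Qed.
Lemma mg (d : R) : measurable_fun D (fun x : R => (Num.min 1 (d / x))%:E).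
Proof.
apply: measurableT_comp => //.
apply: open_continuous_measurable_fun; first exact: oD.
move=> x; rewrite inE /D /= in_itv /= andbT => x0.
apply: (@continuous_min R R (fun=> 1) (fun x => d / x) x).
  exact: cst_continuous.
apply: continuousM; first exact: cst_continuous.
by apply: inv_continuous; rewrite gt_eqF.
Qed.
Lemma gmul (d1 d2 x : R) : 0 < d1 -> d1 <= d2 -> 0 < x ->
  Num.min 1 (d2 / x) <= (d2 / d1) * Num.min 1 (d1 / x).
Proof.
move=> h1 h12 hx.
have e1 : d2 / d1 * (d1 / x) = d2 / x by field; rewrite ?gt_eqF.
have hq : 1 <= d2 / d1 by rewrite ler_pdivlMr // mul1r.
rewrite minEle; case: ifP => H; rewrite minEle; case: ifP => H2.
- by rewrite mulr1.
- by rewrite e1.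
- rewrite mulr1; apply: le_trans hq; by apply: ltW; rewrite ltNge H.
- by rewrite e1.
Qed.
Lemma g01 {d x : R} : 0 <= d -> 0 < x -> 0 <= Num.min 1 (d / x) <= 1.
Proof.
move=> hd hx; rewrite ge_min le_min lexx /= ler01 /=.
by rewrite divr_ge0 // ltW.
Qed.

Variable P : probability R R.
Hypothesis hP : P D = 1%E.

Lemma Dpos {x : R} : D x -> 0 < x.
Proof. by rewrite /D /= in_itv /= andbT. Qed.

Lemma L_ge0 (d : R) : 0 <= d -> (0 <= Lmu P d)%E.
Proof.
move=> hd; apply: integral_ge0 => x /Dpos hx.
by rewrite lee_fin; case/andP: (g01 hd hx).
Qed.

Lemma L_le1 (d : R) : 0 <= d -> (Lmu P d <= 1)%E.
Proof.
move=> hd; rewrite /Lmu.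
have -> : (1 = \int[P]_(x in D) (cst 1%E) x)%E.
  by rewrite integral_cst ?hP ?mul1e //; exact: mD.
apply: ge0_le_integral.
- exact: mD.
- by move=> x /Dpos hx; rewrite lee_fin; case/andP: (g01 hd hx).
- exact: mg.
- exact: measurable_cst.
- by move=> x /Dpos hx; rewrite lee_fin; case/andP: (g01 hd hx).
Qed.

Lemma L_fin (d : R) : 0 <= d -> Lmu P d = (fine (Lmu P d))%:E.
Proof.
move=> hd; rewrite fineK // ge0_fin_numE ?L_ge0 //.
by apply: (le_lt_trans (L_le1 d hd)); rewrite ltry.
Qed.

Lemma L_mono (d1 d2 : R) : 0 <= d1 -> d1 <= d2 -> (Lmu P d1 <= Lmu P d2)%E.
Proof.
move=> h1 h12; apply: ge0_le_integral.
- exact: mD.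
- by move=> x /Dpos hx; rewrite lee_fin; case/andP: (g01 h1 hx).
- exact: mg.
- exact: mg.
move=> x /Dpos hx; rewrite lee_fin le_min ge_min lexx /= ge_min.
apply/orP; right; apply: ler_wpM2r => //.
by rewrite invr_ge0 ltW.
Qed.

Lemma L_mul (d1 d2 : R) : 0 < d1 -> d1 <= d2 ->
  (Lmu P d2 <= (d2 / d1)%:E * Lmu P d1)%E.
Proof.
move=> h1 h12; rewrite /Lmu -ge0_integralZl_EFin.
- apply: ge0_le_integral.
  + exact: mD.
  + by move=> x /Dpos hx; rewrite lee_fin; case/andP: (g01 (le_trans (ltW h1) h12) hx).
  + exact: mg.
  + apply: measurable_funeM; exact: mg.
  + by move=> x /Dpos hx; rewrite -EFinM lee_fin; apply: gmul.
- exact: mD.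
- by move=> x /Dpos hx; rewrite lee_fin; case/andP: (g01 (ltW h1) hx).
- exact: mg.
- by rewrite divr_ge0 // ltW // (lt_le_trans h1 h12).
Qed.
Lemma L_lower (d : R) : 0 < d -> (P `]0%R, d]%classic <= Lmu P d)%E.
Proof.
move=> hd.
have mA : measurable (`]0%R, d]%classic : set R) by exact: measurable_itv.
have -> : (P `]0%R, d]%classic = \int[P]_(x in D) (\1_(`]0%R, d]%classic) x)%:E)%E.
  rewrite integral_indic //; last exact: mD.
  congr (P _); apply/seteqP; split => x /=; rewrite !in_itv /= ?andbT.
    by move=> /[dup] /andP[h0 _] ->; split => //; rewrite /D /= in_itv /= andbT.
  by case.
apply: ge0_le_integral.
- exact: mD.
- by move=> x _; rewrite lee_fin.
- by apply: measurableT_comp => //; exact: measurable_indic.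
- exact: mg.
move=> x /Dpos hx; rewrite lee_fin indicE.
case: (boolP (x \in _)) => H.
  rewrite le_min lexx /= ler_pdivlMr // mul1r.
  by move/set_mem: H; rewrite /= in_itv /= => /andP[].
by rewrite le_min ler01 /= divr_ge0 // ltW.
Qed.

Lemma L_upper (d t : R) : 0 <= d -> 0 < t ->
  (Lmu P d <= P `]0%R, t]%classic + (d / t)%:E)%E.
Proof.
move=> hd ht.
have mA : measurable (`]0%R, t]%classic : set R) by exact: measurable_itv.
have -> : (P `]0%R, t]%classic + (d / t)%:E =
   \int[P]_(x in D) ((\1_(`]0%R, t]%classic) x)%:E + (d / t)%:E))%E.
  rewrite ge0_integralD; last first.
  - exact: measurable_cst.
  - by move=> x _; rewrite lee_fin divr_ge0 // ltW.
  - by apply: measurableT_comp => //; exact: measurable_indic.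
  - by move=> x _; rewrite lee_fin.
  - exact: mD.
  rewrite integral_indic //; last exact: mD.
  have -> : (\int[P]_(x in D) (d / t)%:E = (d/t)%:E)%E.
    rewrite (integral_cst P mD) -[RHS]mule1; congr (_ * _)%E; exact: hP.
  have -> // : (`]0%R, t] `&` D = `]0%R, t])%classic.
  apply/seteqP; split => x /=; rewrite !in_itv /= ?andbT.
    by case.
  by move=> /[dup] /andP[h0 _] ->; split => //; rewrite /D /= in_itv /= andbT.
apply: ge0_le_integral.
- exact: mD.
- by move=> x /Dpos hx; rewrite lee_fin; case/andP: (g01 hd hx).
- exact: mg.
- apply: emeasurable_funD.
    by apply: measurableT_comp => //; exact: measurable_indic.
  exact: measurable_cst.
move=> x /Dpos hx; rewrite -EFinD lee_fin indicE.
case: (boolP (x \in _)) => H.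
  by rewrite ge_min /= lerDl divr_ge0 // ltW.
rewrite /= add0r ge_min; apply/orP; right.
apply: ler_wpM2l => //.
rewrite lef_pV2 ?posrE //; apply: ltW; move: H.
by move/negP; rewrite in_setE /= in_itv /= hx /= ltNge => /negP.
Qed.
Lemma small_P (e : R) : 0 < e -> exists t : R, 0 < t /\ (P `]0%R, t]%classic < e%:E)%E.
Proof.
move=> he.
pose F := fun n : nat => (`]0%R, (n.+1%:R)^-1]%classic : set R).
have mF : forall i, measurable (F i) by move=> i; exact: measurable_itv.
have cap0 : \bigcap_n F n = set0.
  apply/seteqP; split => x //= Hx.
  have x0 : 0 < x by have := Hx 0%N I; rewrite /F /= in_itv /= => /andP[].
  have [N hN] : exists N : nat, x^-1 < N%:R.
    by exists (Num.Def.archi_bound x^-1); apply: archi_boundP; rewrite invr_ge0 ltW.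
  have := Hx N I; rewrite /F /= in_itv /= => /andP[_].
  rewrite -[X in _ <= X]div1r ler_pdivlMr ?ltr0n // => h1.
  have hxi : x * x^-1 = 1 by rewrite mulfV // gt_eqF.
  have hN1 : (N.+1%:R : R) = N%:R + 1 by rewrite -natr1.
  rewrite hN1 in h1; nra.
have F0 : (P (F 0%N) < +oo)%E.
  apply: (le_lt_trans (probability_le1 P (mF 0%N))); by rewrite ltry.
have ni : nonincreasing_seq F.
  move=> n m nm; apply/subsetPset => x; rewrite /F /= !in_itv /= => /andP[-> h] /=.
  apply: (le_trans h); rewrite lef_pV2 ?posrE ?ltr0n // ler_nat; exact: nm.
have := nonincreasing_cvg_mu F0 mF _ ni.
rewrite cap0 measure0 => /(_ (measurable0)) H.
have : \forall n \near \oo, (P (F n) < e%:E)%E.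
  apply: (H [set y | (y < e%:E)%E]).
  by apply: open_nbhs_nbhs; split; [exact: open_ereal_lt_ereal | rewrite /= lte_fin].
case=> N _ HN; exists (N.+1%:R^-1); split; first by rewrite invr_gt0 ltr0n.
exact: (HN N (leqnn N)).
Qed.
Lemma big_P (c : R) : c < 1 -> exists t : R, 0 < t /\ (c%:E < P `]0%R, t]%classic)%E.
Proof.
move=> hc.
pose F := fun n : nat => (`]0%R, n.+1%:R]%classic : set R).
have mF : forall i, measurable (F i) by move=> i; exact: measurable_itv.
have cup : \bigcup_n F n = D.
  apply/seteqP; split => x /=.
    by case=> n _; rewrite /F /D /= !in_itv /= andbT => /andP[].
  rewrite /D /= in_itv /= andbT => x0.
  have [N hN] : exists N : nat, x < N%:R.
    by exists (Num.Def.archi_bound x); apply: archi_boundP; rewrite ltW.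
  exists N => //; rewrite /F /= in_itv /= x0 /=.
  by apply: (le_trans (ltW hN)); rewrite ler_nat.
have nd : nondecreasing_seq F.
  move=> n m nm; apply/subsetPset => x; rewrite /F /= !in_itv /= => /andP[-> h] /=.
  by apply: (le_trans h); rewrite ler_nat ltnS.
have := nondecreasing_cvg_mu (mu := P) mF _ nd.
rewrite cup => /(_ mD) H.
have : \forall n \near \oo, (c%:E < P (F n))%E.
  apply: (H [set y | (c%:E < y)%E]).
  apply: open_nbhs_nbhs; split; first exact: open_ereal_gt_ereal.
  by rewrite /= (_ : P D = 1%E) ?lte_fin //.
case=> N _ HN; exists N.+1%:R; split; first by rewrite ltr0n.
exact: (HN N (leqnn N)).
Qed.
Lemma Pfin {A : set R} : measurable A -> P A = (fine (P A))%:E.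
Proof.
move=> mA; rewrite fineK // ge0_fin_numE ?measure_ge0 //.
by apply: (le_lt_trans (probability_le1 P mA)); rewrite ltry.
Qed.

Lemma int_ind {A : set R} : measurable A -> A `<=` D ->
  (\int[P]_(x in D) (\1_A x)%:E = P A)%E.
Proof.
move=> mA AD; rewrite integral_indic //; last exact: mD.
by rewrite setIidl.
Qed.

Lemma int_cst (k : R) : (\int[P]_(x in D) k%:E = k%:E)%E.
Proof. by rewrite (integral_cst P mD) -[RHS]mule1; congr (_ * _)%E; exact: hP. Qed.

Lemma m_ind (A : set R) : measurable A ->
  measurable_fun D (fun x : R => (@indic R R A x)%:E).
Proof. by move=> mA; apply: measurableT_comp => //; exact: measurable_indic. Qed.

Lemma ind_itv (a b x : R) : \1_(`]a, b]%classic) x = ((a < x) && (x <= b))%:R :> R.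
Proof.
rewrite indicE; case: (boolP (x \in _)) => H.
  by move/set_mem: H; rewrite /= in_itv => ->.
case: (boolP (a < x <= b)) => // H2; case/negP: H.
by apply/mem_set; rewrite /= in_itv.
Qed.

Lemma itv_sub (a b : R) : 0 <= a -> (`]a, b]%classic : set R) `<=` D.
Proof.
move=> a0 x /=; rewrite /D /= !in_itv /= andbT => /andP[ax _].
exact: le_lt_trans ax.
Qed.

Lemma L_strict (d1 d2 c : R) : 0 < d1 -> d1 < d2 -> Lmu P d1 = c%:E -> c < 1 ->
  (c%:E < Lmu P d2)%E.
Proof.
move=> h1 h12 Lc c1.
have c0 : 0 <= c by rewrite -lee_fin -Lc L_ge0 // ltW.
set eta := (1 - c) / 3.
have eta0 : 0 < eta by rewrite /eta divr_gt0 // subr_gt0.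
have eta1 : eta < 1 by rewrite /eta ltr_pdivrMr //; lra.
set a := d1 / (1 - eta).
have a0 : 0 < a by rewrite /a divr_gt0 // subr_gt0.
have da : d1 / a = 1 - eta by rewrite /a invf_div mulrA mulrC mulrA mulVf ?mul1r // gt_eqF.
have [b [b0 Hb]] := big_P (c + 2 * eta) ltac:(rewrite /eta; lra).
set eps := Num.min eta ((d2 - d1) / b).
have eps0 : 0 < eps by rewrite /eps lt_min eta0 /= divr_gt0 // subr_gt0.
have mab : measurable (`]a, b]%classic : set R) by exact: measurable_itv.
have m0b : measurable (`]0%R, b]%classic : set R) by exact: measurable_itv.
have U1 : (P `]0%R, b]%classic <= P `]a, b]%classic + ((eta%:E) + Lmu P d1))%E.
  rewrite -(int_ind m0b (itv_sub 0%R b (lexx 0))) -(int_ind mab (itv_sub a b (ltW a0))).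
  rewrite -int_cst /Lmu -ge0_integralD; first last.
  - exact: mg.
  - by move=> x /Dpos hx; rewrite lee_fin; case/andP: (g01 (ltW h1) hx).
  - exact: measurable_cst.
  - by move=> x _; rewrite lee_fin ltW.
  - exact: mD.
  rewrite -ge0_integralD; first last.
  - apply: emeasurable_funD; [exact: measurable_cst | exact: mg].
  - move=> x /Dpos hx; rewrite -EFinD lee_fin; apply: addr_ge0; first exact: ltW.
    by case/andP: (g01 (ltW h1) hx).
  - exact: m_ind.
  - by move=> x _; rewrite lee_fin.
  - exact: mD.
  apply: ge0_le_integral.
  - exact: mD.
  - by move=> x _; rewrite lee_fin.
  - exact: m_ind.
  - apply: emeasurable_funD; first exact: m_ind.
    apply: emeasurable_funD; [exact: measurable_cst | exact: mg].
  move=> x /Dpos hx; rewrite -!EFinD lee_fin !ind_itv hx /=.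
  have hm : 0 <= Num.min 1 (d1 / x) by case/andP: (g01 (ltW h1) hx).
  have [xb|xb] := leP x b; have [ax|ax] := ltP a x; rewrite /=; try lra.
  have : 1 - eta <= Num.min 1 (d1 / x).
    rewrite le_min; apply/andP; split; first lra.
    rewrite -da; apply: ler_wpM2l; first exact: ltW.
    by rewrite lef_pV2 ?posrE.
  lra.
have U2 : (Lmu P d1 + eps%:E * P `]a, b]%classic <= Lmu P d2)%E.
  rewrite -(int_ind mab (itv_sub a b (ltW a0))) -ge0_integralZl_EFin; first last.
  - exact: ltW.
  - exact: m_ind.
  - by move=> x _; rewrite lee_fin.
  - exact: mD.
  rewrite /Lmu -ge0_integralD; first last.
  - apply: measurable_funeM; exact: m_ind.
  - by move=> x _; rewrite lee_fin mulr_ge0 // ltW.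
  - exact: mg.
  - by move=> x /Dpos hx; rewrite lee_fin; case/andP: (g01 (ltW h1) hx).
  - exact: mD.
  apply: ge0_le_integral.
  - exact: mD.
  - move=> x /Dpos hx; rewrite -EFinM -EFinD lee_fin; apply: addr_ge0.
      by case/andP: (g01 (ltW h1) hx).
    by rewrite mulr_ge0 // ltW.
  - apply: emeasurable_funD; first exact: mg.
    apply: measurable_funeM; exact: m_ind.
  - exact: mg.
  move=> x /Dpos hx; rewrite -EFinM -EFinD lee_fin ind_itv.
  have [xb|xb] := leP x b; have [ax|ax] := ltP a x; rewrite /= ?mulr0 ?addr0;
    try by rewrite le_min ge_min lexx /= ge_min; apply/orP; right;
      apply: ler_wpM2r; [rewrite invr_ge0 ltW | exact: ltW].
  rewrite mulr1.
  have hmin : Num.min 1 (d1 / x) <= d1 / x by rewrite ge_min lexx orbT.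
  have hda : d1 / x <= 1 - eta.
    rewrite -da; apply: ler_wpM2l; first exact: ltW.
    by rewrite lef_pV2 ?posrE // ltW.
  have he1 : eps <= eta by rewrite /eps ge_min lexx.
  have he2 : eps <= (d2 - d1) / x.
    rewrite /eps ge_min; apply/orP; right; apply: ler_wpM2l; first by rewrite subr_ge0 ltW.
    by rewrite lef_pV2 ?posrE // (lt_trans a0).
  have hsum : d2 / x = d1 / x + (d2 - d1) / x by rewrite -mulrDl addrC subrK.
  rewrite le_min; apply/andP; split; lra.
move: U1 U2; rewrite Lc (Pfin mab) (Pfin m0b) (L_fin d2 (ltW (lt_trans h1 h12))) -EFinM -!EFinD !lee_fin lte_fin => U1 U2.
move: Hb; rewrite (Pfin m0b) lte_fin => Hb.
have : 0 < eps * fine (P `]a, b]%classic) by apply: mulr_gt0 => //; lra.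
lra.
Qed.
Lemma lip_cont (h : R -> R) (k : R) : 0 < k ->
  (forall a b, `|h a - h b| <= k * `|a - b|) -> continuous h.
Proof.
move=> k0 Hh x; apply/cvgrPdist_lt => e e0.
exists (e / k); first by rewrite /= divr_gt0.
move=> y /= hy; apply: le_lt_trans (Hh x y) _.
by rewrite mulrC -ltr_pdivlMr.
Qed.

Lemma f_lip (d0 a b : R) : 0 < d0 -> d0 <= a -> a <= b ->
  0 <= fine (Lmu P b) - fine (Lmu P a) <= (b - a) / d0.
Proof.
move=> h0 ha hab.
have a0 : 0 < a := lt_le_trans h0 ha.
have m := L_mono a b (ltW a0) hab.
have mu := L_mul a b a0 hab.
have g0 := L_ge0 a (ltW a0); have g1 := L_le1 a (ltW a0).
move: m mu g0 g1; rewrite (L_fin a (ltW a0)) (L_fin b (ltW (lt_le_trans a0 hab))).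
rewrite -EFinM !lee_fin => m mu g0 g1.
apply/andP; split; first by rewrite subr_ge0.
set fa := fine (Lmu P a) in m mu g0 g1 *; set fb := fine (Lmu P b) in m mu *.
have e1 : b / a * fa - fa = (b - a) / a * fa by field; rewrite gt_eqF.
have e2 : (b - a) / a * fa <= (b - a) / a.
  by rewrite -[X in _ <= X]mulr1; apply: ler_wpM2l; [rewrite divr_ge0 ?subr_ge0 // ltW | exact: g1].
have e3 : (b - a) / a <= (b - a) / d0.
  by apply: ler_wpM2l; [rewrite subr_ge0 | rewrite lef_pV2 ?posrE].
rewrite /=; lra.
Qed.
Lemma exists_root (c : R) : 0 < c -> c < 1 -> exists d : R, 0 < d /\ Lmu P d = c%:E.
Proof.
move=> c0 c1.
have [t0 [t00 Ht0]] := small_P (c / 2) ltac:(lra).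
set d0 := c / 2 * t0.
have d00 : 0 < d0 by rewrite /d0 mulr_gt0 // divr_gt0.
have Ld0 : fine (Lmu P d0) < c.
  have := L_upper d0 t0 (ltW d00) t00.
  have mt0 : measurable (`]0%R, t0]%classic : set R) by exact: measurable_itv.
  have e : d0 / t0 = c / 2 by rewrite /d0 mulfK // gt_eqF.
  rewrite e (L_fin d0 (ltW d00)) (Pfin mt0) -EFinD lee_fin /=.
  move: Ht0; rewrite (Pfin mt0) lte_fin; lra.
have [t1 [t10 Ht1]] := big_P c c1.
have Lt1 : c < fine (Lmu P t1).
  have := L_lower t1 t10.
  have mt1 : measurable (`]0%R, t1]%classic : set R) by exact: measurable_itv.
  rewrite (L_fin t1 (ltW t10)) (Pfin mt1) lee_fin /=.
  move: Ht1; rewrite (Pfin mt1) lte_fin; lra.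
have d0t1 : d0 <= t1.
  case: (leP d0 t1) => // h.
  have := L_mono t1 d0 (ltW t10) (ltW h).
  rewrite (L_fin d0 (ltW d00)) (L_fin t1 (ltW t10)) lee_fin; lra.
set f := fun d => fine (Lmu P (Num.max d d0)).
have fc : continuous f.
  apply: (@lip_cont _ (d0^-1)); first by rewrite invr_gt0.
  move=> x y; rewrite /f.
  set u := Num.max x d0; set v := Num.max y d0.
  have hu : d0 <= u by rewrite /u le_max lexx orbT.
  have hv : d0 <= v by rewrite /v le_max lexx orbT.
  have hxy1 := ler_norm (x - y).
  have hxy2 : y - x <= `|x - y| by rewrite distrC ler_norm.
  have huv1 : u - v <= `|x - y|.
    rewrite /u /v !maxEle; case: ifP; case: ifP => /= ? ?; lra.
  have huv2 : v - u <= `|x - y|.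
    rewrite /u /v !maxEle; case: ifP; case: ifP => /= ? ?; lra.
  have hd0 : 0 < d0^-1 by rewrite invr_gt0.
  case: (leP u v) => uv.
    have /andP[H0 H] := f_lip d0 u v d00 hu uv; rewrite distrC ger0_norm //.
    apply: (le_trans H); rewrite [leRHS]mulrC; apply: ler_wpM2r => //; exact: ltW.
  have /andP[H0 H] := f_lip d0 v u d00 hv (ltW uv); rewrite ger0_norm //.
  apply: (le_trans H); rewrite [leRHS]mulrC; apply: ler_wpM2r => //; exact: ltW.
have fd0 : f d0 = fine (Lmu P d0) by rewrite /f maxxx.
have ft1 : f t1 = fine (Lmu P t1) by rewrite /f max_l.
have [d hd fd] : exists2 d, d \in `[d0, t1] & f d = c.
  apply: IVT => //; first by move=> x; apply: continuous_subspaceT.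
  rewrite fd0 ft1 ge_min le_max; apply/andP; split; apply/orP; [left|right]; exact: ltW.
move: hd; rewrite in_itv /= => /andP[hd1 hd2].
have dpos : 0 < d := lt_le_trans d00 hd1.
exists d; split => //.
by rewrite (L_fin d (ltW dpos)) -fd /f max_l.
Qed.
Lemma m_id : measurable_fun D (fun x : R => x%:E).
Proof. by apply: measurableT_comp => //; exact: measurable_id. Qed.

Lemma m_inv : measurable_fun D (fun x : R => (x^-1)%:E).
Proof.
apply: measurableT_comp => //.
apply: open_continuous_measurable_fun; first exact: oD.
move=> x; rewrite inE /D /= in_itv /= andbT => x0.
by apply: inv_continuous; rewrite gt_eqF.
Qed.

Lemma mu3E : mu_moment P 3 = (\int[P]_(x in D) x%:E)%E.
Proof.
apply: eq_integral => x /set_mem /Dpos hx.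
by rewrite (_ : (3 - 2 : R) = 1) ?powRr1 // ?ltW //; lra.
Qed.

Lemma mu1E : mu_moment P 1 = (\int[P]_(x in D) (x^-1)%:E)%E.
Proof.
apply: eq_integral => x /set_mem /Dpos hx.
by rewrite (_ : (1 - 2 : R) = - 1) ?powRN ?powRr1 // ?ltW //; lra.
Qed.
Lemma I3fin : (mu_moment P 3 < +oo)%E ->
  mu_moment P 3 = (fine (mu_moment P 3))%:E.
Proof.
move=> h; rewrite fineK // ge0_fin_numE // mu3E.
by apply: integral_ge0 => x /Dpos hx; rewrite lee_fin ltW.
Qed.

Lemma bound_small (c d : R) : 0 < c -> c <= 2^-1 -> 0 < d -> Lmu P d = c%:E ->
  (mu_moment P 3 < +oo)%E -> d <= c * fine (mu_moment P 3).
Proof.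
move=> c0 ch d0 Lc h3.
set m3 := fine (mu_moment P 3).
have E3 : (\int[P]_(x in D) x%:E = m3%:E)%E by rewrite -mu3E; exact: I3fin.
have key : ((2 * c * d)%:E <=
    \int[P]_(x in D) ((c ^+ 2)%:E * x%:E + d%:E * (Num.min 1 (d / x))%:E))%E.
  rewrite -[X in (X <= _)%E]int_cst; apply: ge0_le_integral.
  - exact: mD.
  - by move=> x _; rewrite lee_fin mulr_ge0 ?mulr_ge0 // ltW.
  - exact: measurable_cst.
  - apply: emeasurable_funD; apply: measurable_funeM; [exact: m_id | exact: mg].
  move=> x /Dpos hx; rewrite -!EFinM -EFinD lee_fin.
  set y := x^-1.
  have xy : x * y = 1 by rewrite /y mulfV // gt_eqF.
  have y0 : 0 < y by rewrite /y invr_gt0.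
  rewrite minEle; case: ifP => H.
    have h1 : 2 * c * d <= d by nra.
    have h2 : 0 <= c ^+ 2 * x by rewrite mulr_ge0 ?sqr_ge0 // ltW.
    lra.
  have key : x * (c - d * y) ^+ 2 = c ^+ 2 * x - 2 * c * d + d * (d * y).
    by rewrite /y; field; rewrite gt_eqF.
  have : 0 <= x * (c - d * y) ^+ 2 by rewrite mulr_ge0 ?sqr_ge0 // ltW.
  rewrite key /y; lra.
move: key; rewrite ge0_integralD; first last.
- apply: measurable_funeM; exact: mg.
- move=> x /Dpos hx; rewrite -EFinM lee_fin; apply: mulr_ge0; [exact: ltW | by case/andP: (g01 (ltW d0) hx)].
- apply: measurable_funeM; exact: m_id.
- by move=> x /Dpos hx; rewrite -EFinM lee_fin mulr_ge0 ?sqr_ge0 // ltW.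
- exact: mD.
rewrite ge0_integralZl_EFin; first last.
- by rewrite sqr_ge0.
- exact: m_id.
- by move=> x /Dpos hx; rewrite lee_fin ltW.
- exact: mD.
rewrite ge0_integralZl_EFin; first last.
- exact: ltW.
- exact: mg.
- by move=> x /Dpos hx; rewrite lee_fin; case/andP: (g01 (ltW d0) hx).
- exact: mD.
rewrite E3 (_ : (\int[P]_(x in D) (Num.min 1 (d / x))%:E)%E = Lmu P d) // Lc.
rewrite -!EFinM -EFinD lee_fin => key2.
have : 0 <= c * (c * m3 - d) by lra.
by rewrite pmulr_rge0 // subr_ge0.
Qed.
Lemma big_ineq (c d lam : R) : 0 < d -> Lmu P d = c%:E -> 0 <= lam ->
  (mu_moment P 3 < +oo)%E ->
  ((4 * d + 4 * lam * c)%:E <= (fine (mu_moment P 3))%:E +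
     ((4 * d)%:E * c%:E + ((2 * lam)%:E + (lam ^+ 2)%:E * mu_moment P 1)))%E.
Proof.
move=> d0 Lc l0 h3.
have E3 : (\int[P]_(x in D) x%:E = (fine (mu_moment P 3))%:E)%E by rewrite -mu3E; exact: I3fin.
have gge0 x : D x -> 0 <= Num.min 1 (d / x) by move/Dpos => hx; case/andP: (g01 (ltW d0) hx).
have mg' := mg d.
have key : (\int[P]_(x in D) ((4 * d)%:E + (4 * lam)%:E * (Num.min 1 (d / x))%:E) <=
    \int[P]_(x in D) (x%:E + ((4 * d)%:E * (Num.min 1 (d / x))%:E +
       ((2 * lam)%:E + (lam ^+ 2)%:E * (x^-1)%:E))))%E.
  apply: ge0_le_integral.
  - exact: mD.
  - move=> x /[dup] Dx /Dpos hx; rewrite -EFinM -EFinD lee_fin.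
    by apply: addr_ge0; [rewrite mulr_ge0 // ltW | rewrite mulr_ge0 ?gge0 // mulr_ge0].
  - apply: emeasurable_funD; first exact: measurable_cst.
    by apply: measurable_funeM.
  - apply: emeasurable_funD; first exact: m_id.
    apply: emeasurable_funD; first by apply: measurable_funeM.
    apply: emeasurable_funD; first exact: measurable_cst.
    apply: measurable_funeM; exact: m_inv.
  move=> x /Dpos hx; rewrite -!EFinM -!EFinD lee_fin.
  have x0 : x != 0 by rewrite gt_eqF.
  rewrite minEle; case: ifP => H.
    have key : x^-1 * (x - lam) ^+ 2 = x + lam ^+ 2 * x^-1 - 2 * lam by field.
    have : 0 <= x^-1 * (x - lam) ^+ 2 by rewrite mulr_ge0 ?sqr_ge0 // invr_ge0 ltW.
    rewrite key; lra.
  have key : x^-1 * (x - 2 * d + lam) ^+ 2 =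
     x + 4 * d * (d / x) + lam ^+ 2 * x^-1 - 4 * d + 2 * lam - 4 * lam * (d / x) by field.
  have : 0 <= x^-1 * (x - 2 * d + lam) ^+ 2 by rewrite mulr_ge0 ?sqr_ge0 // invr_ge0 ltW.
  rewrite key; lra.
have hL : (\int[P]_(x in D) (Num.min 1 (d / x))%:E)%E = c%:E by rewrite -Lc.
move: key.
rewrite ge0_integralD; first last.
- by apply: measurable_funeM.
- by move=> x Dx; rewrite -EFinM lee_fin mulr_ge0 ?gge0 // mulr_ge0.
- exact: measurable_cst.
- by move=> x _; rewrite lee_fin mulr_ge0 // ltW.
- exact: mD.
rewrite int_cst ge0_integralZl_EFin; first last.
- by rewrite mulr_ge0.
- exact: mg'.
- by move=> x Dx; rewrite lee_fin gge0.
- exact: mD.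
rewrite hL ge0_integralD; first last.
- apply: emeasurable_funD; first by apply: measurable_funeM.
  apply: emeasurable_funD; first exact: measurable_cst.
  apply: measurable_funeM; exact: m_inv.
- move=> x /[dup] Dx /Dpos hx; rewrite -!EFinM -!EFinD lee_fin.
  apply: addr_ge0; first by rewrite mulr_ge0 ?gge0 // mulr_ge0 // ltW.
  by apply: addr_ge0; rewrite mulr_ge0 ?sqr_ge0 ?invr_ge0 // ltW.
- exact: m_id.
- by move=> x /Dpos hx; rewrite lee_fin ltW.
- exact: mD.
rewrite E3 ge0_integralD; first last.
- apply: emeasurable_funD; first exact: measurable_cst.
  apply: measurable_funeM; exact: m_inv.
- move=> x /Dpos hx; rewrite -!EFinM -!EFinD lee_fin.
  by apply: addr_ge0; rewrite mulr_ge0 ?sqr_ge0 ?invr_ge0 // ltW.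
- by apply: measurable_funeM.
- by move=> x Dx; rewrite -EFinM lee_fin mulr_ge0 ?gge0 // mulr_ge0 // ltW.
- exact: mD.
rewrite ge0_integralZl_EFin; first last.
- by rewrite mulr_ge0 // ltW.
- exact: mg'.
- by move=> x Dx; rewrite lee_fin gge0.
- exact: mD.
rewrite hL ge0_integralD; first last.
- apply: measurable_funeM; exact: m_inv.
- by move=> x /Dpos hx; rewrite -EFinM lee_fin mulr_ge0 ?sqr_ge0 // invr_ge0 ltW.
- exact: measurable_cst.
- by move=> x _; rewrite lee_fin mulr_ge0 // ltW.
- exact: mD.
rewrite int_cst ge0_integralZl_EFin; first last.
- by rewrite sqr_ge0.
- exact: m_inv.
- by move=> x /Dpos hx; rewrite lee_fin invr_ge0 ltW.
- exact: mD.
by rewrite -mu1E -!EFinM -EFinD.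
Qed.
End S.

Theorem theorem1 (R : realType) (P : probability R R)
  (hP : P `]0%R, +oo[%classic = 1%E) (c : R) (hc0 : 0 < c) (hc1 : c < 1) :
  (exists! d : R, 0 < d /\ Lmu P d = c%:E) /\
  (forall d : R, 0 < d -> Lmu P d = c%:E ->
     (mu_moment P 3 < +oo)%E -> d <= delta_star P c).
Proof.
split.
  have [d [d0 Ld]] := @exists_root R P hP c hc0 hc1.
  exists d; split => // d' [d'0 Ld'].
  case: (ltgtP d d') => // h.
    have := @L_strict R P hP d d' c d0 h Ld hc1.
    by rewrite Ld' ltxx.
  have := @L_strict R P hP d' d c d'0 h Ld' hc1.
  by rewrite Ld ltxx.
move=> d d0 Ld h3; rewrite /delta_star.
case: ifP => hc; first exact: (@bound_small R P hP).
have hc' : 2^-1 < c by rewrite ltNge hc.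
have hc2 : 0 < 2 * c - 1 by move: hc'; rewrite -[_^-1]div1r ltr_pdivrMr //; lra.
have I1ge0 : (0 <= mu_moment P 1)%E.
  rewrite (@mu1E R P); apply: integral_ge0 => x /= hx.
  by rewrite lee_fin invr_ge0 ltW //; move: hx; rewrite in_itv /= andbT.
set m3 := fine (mu_moment P 3).
have c1' : 0 < 4 * (1 - c) by lra.
case E1 : (mu_moment P 1) I1ge0 => [r| |] I1ge0 //.
  rewrite lee_fin in I1ge0.
  have [r0|r0] : r = 0 \/ 0 < r.
      by case: (ltgtP 0 r) => h; [right | move: I1ge0; rewrite leNgt h | left].
    have := @big_ineq R P hP c d 0 d0 Ld (lexx 0) h3.
    rewrite E1 r0 -!EFinM -!EFinD lee_fin -/m3 => H.
    rewrite invr0 mulr0 subr0 ler_pdivlMr //; lra.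
  set lam := (2 * c - 1) / r.
  have := @big_ineq R P hP c d lam d0 Ld (ltW (divr_gt0 hc2 r0)) h3.
  rewrite E1 -!EFinM -!EFinD lee_fin -/m3 => H.
  set t := (2 * c - 1) ^+ 2 / r.
  have e1 : lam ^+ 2 * r = t by rewrite /lam /t; field; rewrite gt_eqF.
  have e2 : 2 * lam - 4 * lam * c = - 2 * t by rewrite /lam /t; field; rewrite gt_eqF.
  rewrite ler_pdivlMr //; lra.
have := @big_ineq R P hP c d 0 d0 Ld (lexx 0) h3.
rewrite E1 expr0n /= mul0e adde0 -!EFinM -!EFinD lee_fin -/m3 => H.
rewrite subr0 ler_pdivlMr //; lra.
Qed.
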